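(* Let $m\ge 1$, let $y_1,\dots,y_m$ be distinct integers each less than $-1$, and let $D=\{1,y_1,\dots,y_m\}$. If $(T,s)$ is a signed tree that realizes $D$, then $diam(T)\ge 4$ if $m=1$, $diam(T)\ge 5$ if $m=2$, and $diam(T)\ge 6$ if $m>2$.
   Context: A signed tree is a pair $(T,s)$ where $T$ is a finite tree and $s:E(T)\to\{+,-\}$. The signed degree $sdeg(v)$ of a vertex is the number of incident positive edges minus the number of incident negative edges. $(T,s)$ realizes $D$ if $D=\{sdeg(v):v\in V(T)\}$. $diam(T)$ denotes the diameter of $T$. *)

(* Defs.v *)
From mathcomp Require Import all_boot all_order all_algebra.
Set Implicit Arguments. Unset Strict Implicit. Unset Printing Implicit Defensive.
Import Order.TTheory GRing.Theory Num.Theory.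

Definition simple_graph (V : finType) (e : rel V) : Prop :=
  symmetric e /\ irreflexive e.

Definition connected_graph (V : finType) (e : rel V) : Prop :=
  forall x y : V, connect e x y.

Definition acyclic_graph (V : finType) (e : rel V) : Prop :=
  forall c : seq V, ucycle e c -> size c < 3.

Definition is_tree (V : finType) (e : rel V) : Prop :=
  0 < #|V| /\ simple_graph e /\ connected_graph e /\ acyclic_graph e.

(* A sign assignment s on the edges: the edge {x,y} is positive iff s [set x; y]
   (values of s on non-edges are irrelevant). *)
Definition sdeg (V : finType) (e : rel V) (s : {set V} -> bool) (v : V) : int :=
  (#|[set u | e v u && s [set v; u]]|%:Z - #|[set u | e v u && ~~ s [set v; u]]|%:Z)%R.

Definition realizes (V : finType) (e : rel V) (s : {set V} -> bool) (D : seq int) : Prop :=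
  forall z : int, (exists v : V, sdeg e s v = z) <-> z \in D.

(* distance: least n such that a walk of length n joins x to y
   (searched among 0..#|V|-1, enough for connected graphs) *)
Definition dist (V : finType) (e : rel V) (x y : V) : nat :=
  find (fun n => [exists p : n.-tuple V, path e x p && (last x p == y)])
       (iota 0 #|V|).

Definition diam (V : finType) (e : rel V) : nat :=
  \max_(x : V) \max_(y : V) dist e x y.

(* Main.v *)
Require Import Defs.
From mathcomp Require Import all_boot all_order all_algebra.
From mathcomp Require Import zify.
Import Order.TTheory GRing.Theory Num.Theory.

Section Tree.
Variables (V : finType) (e : rel V).
Hypothesis esym : symmetric e.
Hypothesis eirr : irreflexive e.
Hypothesis acyc : acyclic_graph e.

Definition rm (u w : V) : rel V := fun a b =>
  e a b && ~~ ((a == u) && (b == w) || (a == w) && (b == u)).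

Lemma rm_sym u w : symmetric (rm u w).
Proof.
move=> a b; rewrite /rm esym.
by case: (a == u); case: (b == w); case: (a == w); case: (b == u); rewrite ?orbF ?orbT /=.
Qed.

Lemma cycD u p : uniq (u :: p) -> path e u p -> e (last u p) u -> size p <= 1.
Proof.
move=> up pp el.
have := @acyc (u :: p).
rewrite /ucycle /= rcons_path pp el -/(uniq (u :: p)) up /=.
by move=> /(_ isT).
Qed.

Lemma noconnect u w : e u w -> ~~ connect (rm u w) u w.
Proof.
move=> euw; apply/negP => /connectP [p pp lp].
move: lp; case: (shortenP pp) => p' pp' up' _ lp'.
have pe : path e u p'.
  by apply: sub_path pp' => a b /andP [].
have := @cycD u p' up' pe; rewrite -lp' esym euw => /(_ isT) H.
move: H pp' up' lp' {pe}; case: p' => [|a [|b q]] //=.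
- by move=> _ _ _ wu; move: euw; rewrite wu eirr.
- move=> _ /andP [] /andP [] _ H _ _ wa. move: H. rewrite wa !eqxx. done.
Qed.

Lemma lip (f : V -> nat) : (forall a b, e a b -> f b <= (f a).+1) ->
  forall z q, path e z q -> f (last z q) <= f z + size q.
Proof.
move=> H z q; elim: q z => [|a q IH] z /=; first by rewrite addn0.
move=> /andP [eza pq]; have := IH _ pq; have := H _ _ eza; lia.
Qed.

Lemma ext z q y : uniq (z :: q) -> path e z q -> e y z -> y != head z q ->
  uniq (y :: z :: q).
Proof.
move=> uq pq eyz hy; rewrite cons_uniq uq andbT.
have yz : y != z by apply/eqP => yz; move: eyz; rewrite yz eirr.
rewrite in_cons negb_or yz /=; apply/negP => yq.
case/splitPr: yq uq pq hy => q1 q2 uq pq hy.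
have u1 : uniq (z :: rcons q1 y).
  move: uq; rewrite -cats1 -cat_cons -(cat1s y q2) catA cat_uniq.
  by case/and3P.
have p1 : path e z (rcons q1 y).
  by move: pq; rewrite cat_path rcons_path /= => /and3P [-> ->].
have := @cycD z _ u1 p1; rewrite last_rcons eyz size_rcons => /(_ isT).
by case: q1 {u1 p1 uq pq} hy => //=; rewrite eqxx.
Qed.

Lemma revp x p : uniq (x :: p) -> path e x p ->
  [/\ uniq (last x p :: rev (belast x p)), path e (last x p) (rev (belast x p)),
      last (last x p) (rev (belast x p)) = x & size (rev (belast x p)) = size p].
Proof.
move=> up pp; have E : last x p :: rev (belast x p) = rev (x :: p).
  by rewrite [in RHS]lastI rev_rcons.
split.
- by rewrite E rev_uniq.
- rewrite rev_path; apply: sub_path pp => a b; by rewrite esym.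
- have : last (last x p) (rev (belast x p)) = last x (rev (x :: p)).
    by rewrite -E.
  by rewrite rev_cons last_rcons.
- by rewrite size_rev size_belast.
Qed.

Lemma geo x p : uniq (x :: p) -> path e x p ->
  forall q, path e x q -> last x q = last x p -> size p <= size q.
Proof.
move=> up pp q pq lq.
set c := x :: p.
have szc : size c = (size p).+1 by [].
have edge j : j < size p -> e (nth x c j) (nth x c j.+1).
  by move=> jp; move/(pathP x): pp => /(_ j jp).
have inj j k : j <= size p -> k <= size p -> nth x c j = nth x c k -> j = k.
  by move=> jp kp E; apply/eqP; rewrite -(nth_uniq x _ _ up) ?E //.
have rme i j : i < size p -> j < size p -> j != i ->
    rm (nth x c i) (nth x c i.+1) (nth x c j) (nth x c j.+1).
  move=> ip jp ji; rewrite /rm edge //=; apply/negP.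
  case/orP => /andP [/eqP E1 /eqP E2].
  - by move: (inj _ _ (ltnW jp) (ltnW ip) E1) ji => ->; rewrite eqxx.
  - by move: (inj _ _ (ltnW jp) ip E1) (inj _ _ jp (ltnW ip) E2); lia.
pose ch i z := connect (rm (nth x c i) (nth x c i.+1)) z (nth x c i.+1).
pose f z := \sum_(i < size p) (ch i z : nat).
have f0 : f x = 0.
  apply/eqP; rewrite sum_nat_eq0; apply/forallP => i; rewrite eqb0.
  have ip := ltn_ord i.
  have cx : forall j, j <= i -> connect (rm (nth x c i) (nth x c i.+1)) x (nth x c j).
    elim=> [|j IH] ji; first by rewrite connect0.
    apply: connect_trans (IH (ltnW ji)) (connect1 _).
    by apply: rme => //; [lia | lia].
  apply/negP => H.
  have := @noconnect _ _ (edge _ ip); rewrite (connect_trans _ H) //.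
  by rewrite (sym_connect_sym (@rm_sym _ _)) cx.
have fl : f (last x p) = size p.
  have -> : last x p = nth x c (size p) by rewrite -[size p]/((size c).-1) nth_last.
  transitivity (\sum_(i < size p) 1); last by rewrite big_const_ord iter_addn_0 mul1n.
  apply: eq_bigr => i _; have ip := ltn_ord i.
  suff : forall k, i < k <= size p -> ch i (nth x c k) by move/(_ (size p)); rewrite ip leqnn => /(_ isT) ->.
  elim=> [|k IH] // /andP [ik kp].
  case: (eqVneq k i) => [->|ki]; first by rewrite /ch connect0.
  apply: connect_trans (connect1 _) (IH _); last by lia.
  by rewrite rm_sym; apply: rme => //; lia.
have L : forall a b, e a b -> f b <= (f a).+1.
  move=> a b eab.
  have tr i : rm (nth x c i) (nth x c i.+1) a b -> (ch i b : nat) <= ch i a.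
    move=> H; rewrite /ch; case: (connect _ b _) /idP => //= Hb.
    by rewrite (connect_trans (connect1 H) Hb).
  case: (boolP [exists i : 'I_(size p), ((a == nth x c i) && (b == nth x c i.+1))
                  || ((a == nth x c i.+1) && (b == nth x c i))]).
  - case/existsP => [[i0 i0p] H0] /=.
    have tr' : forall i : 'I_(size p), i != Ordinal i0p -> (ch i b : nat) <= ch i a.
      move=> i ii0; apply: tr; rewrite /rm eab /=; apply/negP => H1.
      move/eqP: ii0; apply; apply: val_inj => /=.
      move: H0 H1; case: i => k ip /=.
      move=> H0 H1; move: H0 H1 => /orP [] /andP [/eqP a1 /eqP b1] /orP [] /andP [/eqP a2 /eqP b2];
        rewrite a1 b1 in a2 b2.
      + by move: (inj _ _ (ltnW i0p) (ltnW ip) a2); lia.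
      + by move: (inj _ _ (ltnW i0p) ip a2) (inj _ _ i0p (ltnW ip) b2); lia.
      + by move: (inj _ _ i0p (ltnW ip) a2) (inj _ _ (ltnW i0p) ip b2); lia.
      + by move: (inj _ _ (ltnW i0p) (ltnW ip) b2); lia.
    rewrite /f (bigD1 (Ordinal i0p)) //= [in X in _ <= X.+1](bigD1 (Ordinal i0p)) //=.
    have : \sum_(i < size p | i != Ordinal i0p) (ch i b : nat) <= \sum_(i < size p | i != Ordinal i0p) (ch i a : nat).
      by apply: leq_sum => i /= /tr'. have := leq_b1 (ch i0 b).
    move=> h1 h2; rewrite -addSn; apply: leq_add h2; exact: leq_trans h1 (ltn0Sn _).
  - rewrite negb_exists => /forallP H.
    apply: leqW; apply: leq_sum => i _; apply: tr.
    by rewrite /rm eab /=; have := H i; rewrite negb_or !negb_and.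
have := @lip f L x q pq; rewrite lq fl f0 add0n //.
Qed.

Definition deep (v : V) := exists u1 u2 w1 w2,
  [/\ u1 != u2, e v u1, e v u2, e u1 w1 & e u2 w2] /\ w1 != v /\ w2 != v.

Lemma grow b q : deep b -> uniq (b :: q) -> path e b q ->
  exists u w, uniq (w :: u :: b :: q) && path e w (u :: b :: q).
Proof.
move=> [u1 [u2 [w1 [w2 [[u12 e1 e2 f1 f2] [n1 n2]]]]]] ub pb.
have step : forall u w, e b u -> e u w -> w != b -> u != head b q ->
   exists u w, uniq (w :: u :: b :: q) && path e w (u :: b :: q).
  move=> u w ebu euw wb uh.
  have eub : e u b by rewrite esym.
  have ewu : e w u by rewrite esym.
  have U1 := @ext b q u ub pb eub uh.
  have P1 : path e u (b :: q) by rewrite /= esym ebu pb.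
  have U2 := @ext u (b :: q) w U1 P1 ewu wb.
  by exists u, w; rewrite U2 /= esym euw; move: P1 => /= ->.
case: (eqVneq u1 (head b q)) => h.
- apply: (step u2 w2) => //; by rewrite -h eq_sym.
- exact: (step u1 w1).
Qed.

Lemma longA a p : deep a -> deep (last a p) -> uniq (a :: p) -> path e a p ->
  exists x r, [/\ uniq (x :: r), path e x r & size r = size p + 4].
Proof.
move=> da db up pp.
have [U1 P1 L1 S1] := @revp a p up pp.
have [u [w /andP [U2 P2]]] := @grow _ _ db U1 P1.
have [U3 P3 L3 S3] := @revp _ _ U2 P2.
move: L3 U3 P3 S3; rewrite /= L1 => L3 U3 P3 S3.
have [u' [w' /andP [U4 P4]]] := @grow _ _ da U3 P3.
do 2 eexists; split; [exact U4 | exact P4 | ].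
by rewrite /= S3 /= S1 addnC.
Qed.
End Tree.
Arguments deep {V} e v.

Lemma distge (V : finType) (e : rel V) : symmetric e -> irreflexive e -> acyclic_graph e ->
  forall x r, uniq (x :: r) -> path e x r -> size r <= dist e x (last x r).
Proof.
move=> esym eirr acyc x r ur pr.
have szV : (size r).+1 <= #|V|.
  by move/card_uniqP: ur => /= <-; apply: max_card.
rewrite /dist leqNgt; apply/negP => H.
have hs : has (fun n => [exists p : n.-tuple V, path e x p && (last x p == last x r)]) (iota 0 #|V|).
  by rewrite has_find size_iota; apply: leq_trans H _; apply: ltnW.
have := nth_find 0 hs; rewrite nth_iota; last exact: leq_trans H (ltnW szV).
rewrite add0n; case/existsP => t /andP [pt /eqP lt].
have := @geo _ _ esym eirr acyc _ _ ur pr _ pt lt.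
by rewrite size_tuple leqNgt H.
Qed.

Lemma dist_le_diam (V : finType) (e : rel V) x y : dist e x y <= diam e.
Proof.
rewrite /diam; apply: leq_trans (leq_bigmax x).
exact: (leq_bigmax (F := fun y => dist e x y) y).
Qed.

Lemma diam_long (V : finType) (e : rel V) : symmetric e -> irreflexive e -> acyclic_graph e ->
  forall a p, deep e a -> deep e (last a p) -> uniq (a :: p) -> path e a p ->
  size p + 4 <= diam e.
Proof.
move=> esym eirr acyc a p da db up pp.
have [x [r [ur pr sr]]] := @longA _ _ esym eirr acyc _ _ da db up pp.
rewrite -sr; apply: leq_trans (@distge _ _ esym eirr acyc _ _ ur pr) _.
exact: dist_le_diam.
Qed.

Lemma upath_of (V : finType) (e : rel V) a b : connect e a b ->
  exists p, [/\ uniq (a :: p), path e a p & last a p = b].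
Proof.
move=> /connectP [p pp ->].
case: (shortenP pp) => p' pp' up' _.
by exists p'.
Qed.

Lemma deep_of (V : finType) (e : rel V) (s : {set V} -> bool) : symmetric e ->
  (forall u, sdeg e s u != (-1)%R) -> forall v, (sdeg e s v < -1)%R -> deep e v.
Proof.
move=> esym no1 v.
rewrite /sdeg => H.
have : 1 < #|[set u | e v u && ~~ s [set v; u]]|.
  move: H; set a := #|_|; set b := #|_|; lia.
case/card_gt1P => u1 [u2 [H1 H2 u12]].
have oth : forall u, u \in [set u | e v u && ~~ s [set v; u]] -> exists w, e u w /\ w != v.
  move=> u; rewrite inE => /andP [evu nsu].
  case: (boolP [exists w, e u w && (w != v)]).
    by case/existsP => w /andP [? ?]; exists w.
  rewrite negb_exists => /forallP Hw.
  have Hw' : forall t, e u t -> t = v.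
    by move=> t eut; have := Hw t; rewrite eut /= => /negPn /eqP.
  have sv : s [set u; v] = false by rewrite setUC; apply/negbTE.
  have E1 : [set t | e u t && s [set u; t]] = set0.
    apply/setP => t; rewrite !inE; apply/negbTE; apply/negP => /andP [eut].
    by rewrite (Hw' _ eut) sv.
  have E2 : [set t | e u t && ~~ s [set u; t]] = [set v].
    apply/setP => t; rewrite !inE; apply/idP/idP.
      by case/andP => eut _; rewrite (Hw' _ eut).
    by move/eqP => ->; rewrite esym evu sv.
  by move: (no1 u); rewrite /sdeg E1 E2 cards0 cards1.
have [w1 [f1 n1]] := oth _ H1.
have [w2 [f2 n2]] := oth _ H2.
move: H1 H2; rewrite !inE => /andP [e1 _] /andP [e2 _].
by exists u1, u2, w1, w2.
Qed.

Theorem mainTheorem5 (V : finType) (e : rel V) (s : {set V} -> bool)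
    (m : nat) (ys : seq int) :
  (1 <= m)%N -> size ys = m -> uniq ys -> all (fun y : int => (y < -1)%R) ys ->
  is_tree e -> realizes e s (1%R :: ys) ->
  (if m == 1%N then 4 else if m == 2%N then 5 else 6) <= diam e.
Proof.
move=> m1 sz uq aly [_ [[esym eirr] [conn acyc]]] real.
have no1 : forall u, sdeg e s u != (-1)%R.
  move=> u; apply/eqP => Hu.
  have : (-1)%R \in (1%R :: ys) by apply/real; exists u.
  rewrite in_cons /= => Hin.
  by move/allP: aly => /(_ _ Hin); rewrite ltxx.
have dv : forall y, y \in ys -> exists v, sdeg e s v = y /\ deep e v.
  move=> y yin.
  have [v Hv] : exists v, sdeg e s v = y by apply/real; rewrite in_cons yin orbT.
  exists v; split => //; apply: (@deep_of _ _ s esym no1).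
  by rewrite Hv; move/allP: aly => /(_ _ yin).
have DL := @diam_long _ _ esym eirr acyc.
have two : forall a b, deep e a -> deep e b -> a != b -> 5 <= diam e.
  move=> a b da db ab.
  have [p [up pp lp]] := @upath_of _ _ _ _ (conn a b).
  have : 0 < size p by case: p lp {up pp} => //= ab'; move: ab; rewrite ab' eqxx.
  rewrite -lp in db; have := DL _ _ da db up pp; lia.
have far : forall a b, deep e a -> deep e b -> a != b -> 6 <= diam e \/ e a b.
  move=> a b da db ab.
  have [p [up pp lp]] := @upath_of _ _ _ _ (conn a b).
  case: p lp up pp => [|c [|d p]] lp up pp.
  - by move: ab; rewrite -lp /= eqxx.
  - by right; rewrite -lp /=; case/andP: pp.
  - left; rewrite -lp in db; have := DL _ _ da db up pp; rewrite /=; lia.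
clear real; move: m1; case: ys sz uq aly dv => [|y1 [|y2 [|y3 ys']]] /= <- uq aly dv m1; first by [].
- have [v1 [_ d1]] := dv y1 (mem_head _ _).
  exact: (DL v1 [::] d1 d1).
- have [v1 [s1 d1]] := dv y1 (mem_head _ _).
  have y2in : y2 \in [:: y1; y2] by rewrite !inE eqxx orbT.
  have [v2 [s2 d2]] := dv y2 y2in.
  apply: (two v1 v2 d1 d2); apply/eqP => E.
  by move: uq; rewrite -s1 -s2 E !inE eqxx.
- have [v1 [s1 d1]] := dv y1 (mem_head _ _).
  have y2in : y2 \in [:: y1, y2, y3 & ys'] by rewrite !inE eqxx ?orbT.
  have y3in : y3 \in [:: y1, y2, y3 & ys'] by rewrite !inE eqxx ?orbT.
  have [v2 [s2 d2]] := dv y2 y2in.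
  have [v3 [s3 d3]] := dv y3 y3in.
  move: uq; rewrite /= !inE !negb_or -!andbA => /and5P [n12 n13 _ n23 _].
  have a12 : v1 != v2 by apply: contraNneq n12 => E; rewrite -s1 -s2 E.
  have a13 : v1 != v3 by apply: contraNneq n13 => E; rewrite -s1 -s3 E.
  have a23 : v2 != v3 by apply: contraNneq n23 => E; rewrite -s2 -s3 E.
  case: (far v1 v2 d1 d2 a12) => // e12.
  case: (far v1 v3 d1 d3 a13) => // e13.
  have := DL v2 [:: v1; v3] d2 d3.
  rewrite /= !inE !negb_or (eq_sym v2 v1) a12 a23 a13 esym e12 e13 /=.
  by move=> /(_ isT isT).
Qed.
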